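(* $GR(4,K_4,3) = 10$.
   Context: For positive integers $r,s,t$, $GR(r,K_s,t)$ denotes the minimum integer $n$ such that every coloring of the edges of $K_n$ with $r$ colors contains a copy of $K_s$ whose edges use at most $t$ distinct colors. *)

(* Defs.v *)
From mathcomp Require Import all_boot.
Set Implicit Arguments. Unset Strict Implicit. Unset Printing Implicit Defensive.

(* An r-edge-colouring of K_n: vertices 'I_n, the edge {i,j} with i < j gets
   colour c (i, j) : 'I_r (values of c at pairs with ~(i<j) are irrelevant). *)
Definition edge_colouring (n r : nat) := ('I_n -> 'I_n -> 'I_r).

Definition colours_on (n r : nat) (c : edge_colouring n r) (S : {set 'I_n})
  : {set 'I_r} :=
  [set c i j | i in S, j in S & (i < j)%N].

Definition GR_property (r s t n : nat) : Prop :=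
  forall c : edge_colouring n r,
    exists S : {set 'I_n}, #|S| = s /\ #|colours_on c S| <= t.

Definition GR_is (r s t m : nat) : Prop :=
  GR_property r s t m /\ forall n, n < m -> ~ GR_property r s t n.

(* Main.v *)
Require Import Defs.
From mathcomp Require Import all_boot.
From mathcomp Require Import zify.
Set Implicit Arguments. Unset Strict Implicit. Unset Printing Implicit Defensive.

Definition adj n r (c : edge_colouring n r) (k : 'I_r) (u v : 'I_n) : bool :=
  ((u < v) && (c u v == k)) || ((v < u) && (c v u == k)).

Definition indep n r (c : edge_colouring n r) k (I : {set 'I_n}) : bool :=
  [forall u in I, forall v in I, ~~ adj c k u v].

Definition E n r (c : edge_colouring n r) k (S : {set 'I_n}) :=
  [set p : 'I_n * 'I_n | [&& p.1 \in S, p.2 \in S, p.1 < p.2 & c p.1 p.2 == k]].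

Definition H4 n r (c : edge_colouring n r) k :=
  forall T : {set 'I_n}, #|T| = 4 -> ~~ indep c k T.

Lemma adj_sym n r (c : edge_colouring n r) k u v : adj c k u v = adj c k v u.
Proof. by rewrite /adj orbC. Qed.

Lemma sub4 n (S : {set 'I_n}) : 4 <= #|S| -> exists T : {set 'I_n}, T \subset S /\ #|T| = 4.
Proof.
move/card_geqP=> [s [us ss sS]].
exists [set x in s]; split; first by apply/subsetP=> x; rewrite inE => /sS.
by rewrite cardsE (card_uniqP us).
Qed.

Lemma noind4 n r (c : edge_colouring n r) k I :
  H4 c k -> indep c k I -> #|I| <= 3.
Proof.
move=> H ind; rewrite leqNgt; apply/negP => /sub4 [T [TI cT]].
move: (H T cT); apply/negP/negPn.
apply/forall_inP => u uT; apply/forall_inP => v vT.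
by move/forall_inP: ind => /(_ u (subsetP TI _ uT)) /forall_inP /(_ v (subsetP TI _ vT)).
Qed.

Lemma hit1 n r (c : edge_colouring n r) k (S : {set 'I_n}) :
  H4 c k -> 4 <= #|S| -> 1 <= #|E c k S|.
Proof.
move=> H /sub4 [T [TS cT]]; move: (H T cT).
rewrite /indep negb_forall_in => /exists_inP [u uT].
rewrite negb_forall_in => /exists_inP [v vT]; rewrite negbK => a.
have uS := subsetP TS _ uT; have vS := subsetP TS _ vT.
case/orP: a => /andP [lt e].
  by apply/card_gt0P; exists (u, v); rewrite inE /= uS vS lt e.
by apply/card_gt0P; exists (v, u); rewrite inE /= uS vS lt e.
Qed.

Lemma step n r (c : edge_colouring n r) k (S : {set 'I_n}) : H4 c k ->
  exists I : {set 'I_n}, [/\ I \subset S, #|I| <= 3 & #|S :\: I| + #|E c k (S :\: I)| <= #|E c k S|].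
Proof.
move=> H.
pose P := fun I : {set 'I_n} => (I \subset S) && indep c k I.
have P0 : P set0.
  rewrite /P sub0set /=; apply/forall_inP => u; by rewrite inE.
case: (arg_maxnP (fun I : {set 'I_n} => #|I|) P0) => I /andP[IS indI] Imax.
exists I; split => //; first exact: noind4 indI.
have partner : forall v, v \in S :\: I -> [exists u, (u \in I) && adj c k u v].
  move=> v; rewrite inE => /andP[vI vS].
  case: (boolP [exists u, (u \in I) && adj c k u v]) => // /existsPn none; exfalso.
  have : P (v |: I).
    rewrite /P subUset sub1set vS IS /=.
    apply/forall_inP => x; rewrite in_setU1 => /orP[/eqP-> | xI];
      apply/forall_inP => y; rewrite in_setU1 => /orP[/eqP->|yI].
    - by rewrite /adj ltnn.
    - by rewrite adj_sym; move: (none y); rewrite yI.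
    - by move: (none x); rewrite xI.
    - by move/forall_inP: indI => /(_ x xI) /forall_inP /(_ y yI).
  move/Imax; rewrite cardsU1 vI /=; lia.
pose g v := odflt v [pick u | (u \in I) && adj c k u v].
have gP : forall v, v \in S :\: I -> (g v \in I) && adj c k (g v) v.
  move=> v /partner; rewrite /g; case: pickP => [u -> //| none].
  by move/existsP=> [u]; rewrite none.
pose h (v : 'I_n) := if v < g v then (v, g v) else (g v, v).
pose proj (p : 'I_n * 'I_n) := if p.1 \in I then p.2 else p.1.
have hproj : forall v, v \in S :\: I -> proj (h v) = v.
  move=> v vSI; have := vSI; rewrite inE => /andP[vI _].
  have /andP[gI _] := gP v vSI.
  rewrite /h; case: ifP => _; rewrite /proj /=; [by rewrite (negbTE vI) | by rewrite gI].
have hE : forall v, v \in S :\: I -> h v \in E c k S.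
  move=> v vSI; have := vSI; rewrite inE => /andP[vI vS].
  have /andP[gI a] := gP v vSI; have gS := subsetP IS _ gI.
  rewrite /h inE; case: ifP => lt /=; rewrite ?vS ?gS ?lt /=.
    by case/orP: a => /andP[l e] //; move: (ltn_trans l lt); rewrite ltnn.
  by case/orP: a => /andP[l e] //; rewrite l in lt.
have hnE : forall v, v \in S :\: I -> h v \notin E c k (S :\: I).
  move=> v vSI; have /andP[gI _] := gP v vSI.
  by rewrite /h inE; case: ifP => _ /=; rewrite !inE gI /= ?andbF.
have inj : {in S :\: I &, injective h}.
  by move=> x y xS yS hxy; rewrite -(hproj x xS) -(hproj y yS) hxy.
have disj : (h @: (S :\: I)) :&: E c k (S :\: I) = set0.
  apply/setP => p; rewrite inE [p \in set0]inE; apply/negP => /andP[/imsetP[v vSI ->] hin].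
  by move: (hnE v vSI); rewrite hin.
have sub : (h @: (S :\: I)) :|: E c k (S :\: I) \subset E c k S.
  rewrite subUset; apply/andP; split.
    by apply/subsetP => p /imsetP[v vSI ->]; apply: hE.
  apply/subsetP => p; rewrite !inE => /and4P[/andP[_ -> ] /andP[_ ->] -> ->] //.
have := subset_leq_card sub.
have := cardsUI (h @: (S :\: I)) (E c k (S :\: I)).
rewrite disj cards0 addn0 (card_in_imset inj) => ->. done.
Qed.

Lemma L7 n r (c : edge_colouring n r) k (S : {set 'I_n}) : H4 c k -> 7 <= #|S| -> 5 <= #|E c k S|.
Proof.
move=> H cS; case: (step S H) => I [IS cI le].
have cD : #|S :\: I| = #|S| - #|I| by rewrite cardsD (setIidPr IS).
have := hit1 (S:=S :\: I) H; rewrite cD; lia.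
Qed.

Lemma L10 n r (c : edge_colouring n r) k (S : {set 'I_n}) : H4 c k -> 10 <= #|S| -> 12 <= #|E c k S|.
Proof.
move=> H cS; case: (step S H) => I [IS cI le].
have cD : #|S :\: I| = #|S| - #|I| by rewrite cardsD (setIidPr IS).
have := L7 (S:=S :\: I) H; rewrite cD; lia.
Qed.

Lemma upper (c : edge_colouring 10 4) :
  exists S : {set 'I_10}, #|S| = 4 /\ #|colours_on c S| <= 3.
Proof.
case: (boolP [exists S : {set 'I_10}, (#|S| == 4) && (#|colours_on c S| <= 3)]).
  by move/existsP => [S /andP[/eqP ? ?]]; exists S.
move/existsPn => none; exfalso.
have H : forall k, H4 c k.
  move=> k T cT; move: (none T); rewrite cT eqxx /= -ltnNge => big.
  have kin : k \in colours_on c T.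
    apply/negPn/negP => kout.
    have : colours_on c T \subset [set~ k].
      apply/subsetP => x xin; rewrite !inE; apply/negP => /eqP ex.
      by rewrite -ex xin in kout.
    move/subset_leq_card; rewrite cardsC1 card_ord /=; lia.
  case/imset2P: kin => u v uT; rewrite inE => /andP[vT lt] ->.
  apply/negP => /forall_inP /(_ u uT) /forall_inP /(_ v vT).
  by rewrite /adj lt eqxx.
pose P := [set p : 'I_10 * 'I_10 | p.1 < p.2].
have cP : #|P| = 45.
  rewrite -sum1_card.
  rewrite (eq_bigl (fun p : 'I_10 * 'I_10 => (p.1 \in predT) && (p.1 < p.2))); last by move=> p; rewrite !inE.
  rewrite -(pair_big_dep predT (fun i j : 'I_10 => i < j) (fun _ _ => 1)) /=.
  rewrite !big_ord_recr big_ord0 /=.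
  do 10 (rewrite big_mkcond /= !big_ord_recr big_ord0 /=). done.
have sumE : #|P| = \sum_(k < 4) #|E c k setT|.
  rewrite -sum1_card (partition_big (fun p => c p.1 p.2) xpredT) //=.
  apply: eq_bigr => k _; rewrite sum1dep_card; apply: eq_card => p.
  by rewrite !inE.
have : \sum_(k < 4) 12 <= \sum_(k < 4) #|E c k setT|.
  apply: leq_sum => k _; apply: L10 => //; by rewrite cardsT card_ord.
by rewrite -sumE cP sum_nat_const card_ord.
Qed.

Definition line (k v : nat) : nat :=
  match k with
  | 0 => v %/ 3
  | 1 => v %% 3
  | 2 => (v %% 3 + 2 * (v %/ 3)) %% 3
  | _ => (v %% 3 + v %/ 3) %% 3
  end.

Definition col (u v : nat) : nat :=
  if line 0 u == line 0 v then 0 else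
  if line 1 u == line 1 v then 1 else
  if line 2 u == line 2 v then 2 else 3.

Lemma keyb : all (fun u => all (fun v => all (fun k =>
  (line k u < 3) && ((u != v) ==> (line k u == line k v) ==> (col u v == k)))
  (iota 0 4)) (iota 0 9)) (iota 0 9).
Proof. by vm_compute. Qed.

Lemma key u v (k : 'I_4) : u < 9 -> v < 9 ->
  (line k u < 3) /\ (u != v -> line k u = line k v -> col u v = k).
Proof.
move=> u9 v9.
have uu : u \in iota 0 9 by rewrite mem_iota.
have vv : v \in iota 0 9 by rewrite mem_iota.
have kk : (k : nat) \in iota 0 4 by rewrite mem_iota ltn_ord.
move/allP: keyb => /(_ u uu) /allP /(_ v vv) /allP /(_ k kk) /=.
case/andP=> -> /implyP i; split=> // ne e.
by apply/eqP; move: (i ne); rewrite e eqxx.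
Qed.

Lemma lower n : n < 10 -> ~ GR_property 4 4 3 n.
Proof.
move=> n10 G.
case: (ltnP n 4) => n4.
  case: (G (fun _ _ => ord0)) => S [cS _].
  by have := max_card (mem S); rewrite cS card_ord; lia.
pose c : edge_colouring n 4 := fun u v => inord (col u v).
case: (G c) => S [cS cc].
have all : colours_on c S = setT.
  apply/setP => k; rewrite inE.
  case: (boolP [exists u in S, exists v in S, (u < v) && (line k u == line k v)]).
    move/exists_inP => [u uS /exists_inP [v vS /andP[lt /eqP e]]].
    have u9 : u < 9 by have := ltn_ord u; lia.
    have v9 : v < 9 by have := ltn_ord v; lia.
    have [_ kk] := key k u9 v9.
    apply/imset2P; exists u v => //; first by rewrite inE vS lt.
    rewrite /c kk ?inord_val //; by rewrite neq_ltn lt.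
  move/negP => none; exfalso.
  pose f (v : 'I_n) : 'I_3 := inord (line k v).
  have inj : {in S &, injective f}.
    move=> u v uS vS /(congr1 val).
    have u9 : u < 9 by have := ltn_ord u; lia.
    have v9 : v < 9 by have := ltn_ord v; lia.
    have [lu _] := key k u9 v9; have [lv _] := key k v9 u9.
    rewrite /f /= !inordK // => e.
    case: (ltngtP u v) => [lt|lt|/val_inj //]; exfalso; apply: none.
      by apply/exists_inP; exists u => //; apply/exists_inP; exists v; rewrite // lt e eqxx.
    by apply/exists_inP; exists v => //; apply/exists_inP; exists u; rewrite // lt e eqxx.
  have := max_card (mem (f @: S)); rewrite (card_in_imset inj) cS card_ord.
  done.
by move: cc; rewrite all cardsT card_ord.
Qed.

Theorem mainTheorem10 : GR_is 4 4 3 10.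
Proof.
split; first exact: upper.
exact: lower.
Qed.
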